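(* Suppose $q^{2k}\neq1$. Let $a,b,c$ be pairwise distinct elements of $\{1,\dots,n\}$, and let $\phi_a$ (resp. $\phi_c$) denote either $\psi_a$ or $\psi_a^*$ (resp. $\psi_c$ or $\psi_c^*$). Then in $\mathrm{Cl}_q(n,k)$: \[ [\psi_a\psi_b^*,\psi_b\psi_a^*] = \frac{(\omega_a\omega_b^{-1})^k-(\omega_a\omega_b^{-1})^{-k}}{q^k-q^{-k}},\qquad [\psi_a\psi_b,\psi_b^*\psi_a^*] = \frac{(q\omega_a\omega_b)^k-(q\omega_a\omega_b)^{-k}}{q^k-q^{-k}}, \] \[ [\phi_a\psi_b,\psi_b^*\phi_c]_{q^{\pm k}} = \omega_b^{\mp k}\phi_a\phi_c,\qquad \psi_a\psi_a^*\pm\psi_a^*\psi_a = \frac{q^k\omega_a^k\pm\omega_a^{-k}}{q^k\pm1}, \] where $[A,B]=AB-BA$ and $[A,B]_x=AB-xBA$ (in each identity the signs are taken consistently).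
   Context: Let $\mathbb{k}$ be a field of characteristic different from $2$, let $q\in\mathbb{k}^\times$, and let $n,k$ be positive integers. The quantum Clifford algebra $\mathrm{Cl}_q(n,k)$ is the unital associative $\mathbb{k}$-algebra generated by $\psi_a,\psi_a^*,\omega_a,\omega_a^{-1}$ for $a\in\{1,\dots,n\}$, subject to the relations (for all $a,b\in\{1,\dots,n\}$): $\omega_a\omega_b=\omega_b\omega_a$; $\omega_a\omega_a^{-1}=1$; $\omega_a\psi_b=q^{\delta_{ab}}\psi_b\omega_a$; $\omega_a\psi_b^*=q^{-\delta_{ab}}\psi_b^*\omega_a$; $\psi_a\psi_b+\psi_b\psi_a=0$; $\psi_a^*\psi_b^*+\psi_b^*\psi_a^*=0$; $\psi_a\psi_a^*+q^k\psi_a^*\psi_a=\omega_a^{-k}$; $\psi_a\psi_a^*+q^{-k}\psi_a^*\psi_a=\omega_a^{k}$; and $\psi_a\psi_b^*+\psi_b^*\psi_a=0$ if $a\neq b$. *)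

(* Defs.v *)
From HB Require Import structures.
From mathcomp Require Import all_boot all_order all_algebra.
Set Implicit Arguments. Unset Strict Implicit. Unset Printing Implicit Defensive.
Import Order.TTheory GRing.Theory.
Local Open Scope ring_scope.

Definition comm (R : pzRingType) (x y : R) : R := x * y - y * x.
Definition qcomm (F : fieldType) (A : algType F) (x y : A) (t : F) : A :=
  x * y - t *: (y * x).

(* The defining relations of Cl_q(n,k), realized by elements
   psi a, psis a (= psi_a^* ), om a (= omega_a), omi a (= omega_a^{-1})
   of an F-algebra A.  Generators are indexed by 'I_n = {0,..,n-1}. *)
Definition Clq_rels (F : fieldType) (A : algType F) (n k : nat) (q : F)
    (psi psis om omi : 'I_n -> A) : Prop :=
  forall a b : 'I_n,
    [/\ om a * om b = om b * om a,
        om a * omi a = 1 /\ omi a * om a = 1,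
        om a * psi b = q ^+ (a == b) *: (psi b * om a),
        om a * psis b = q ^- (a == b) *: (psis b * om a)
      & [/\ psi a * psi b + psi b * psi a = 0,
            psis a * psis b + psis b * psis a = 0,
            psi a * psis a + q ^+ k *: (psis a * psi a) = omi a ^+ k,
            psi a * psis a + q ^- k *: (psis a * psi a) = om a ^+ k
          & a != b -> psi a * psis b + psis b * psi a = 0]].

(* Main.v *)
Require Import Defs.
From HB Require Import structures.
From mathcomp Require Import all_boot all_order all_algebra.
From mathcomp Require Import ring.
Import Order.TTheory GRing.Theory.
Local Open Scope ring_scope.

Section Lin.
Variables (F : fieldType) (A : algType F).

Definition lin2 (u v : A) (s t : F) := s *: u + t *: v.

Lemma lin2D u v s t s' t' :
  lin2 u v s t + lin2 u v s' t' = lin2 u v (s + s') (t + t').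
Proof. by rewrite /lin2 !scalerDl addrACA. Qed.

Lemma lin2N u v s t : - lin2 u v s t = lin2 u v (- s) (- t).
Proof. by rewrite /lin2 opprD !scaleNr. Qed.

Lemma lin2B u v s t s' t' :
  lin2 u v s t - lin2 u v s' t' = lin2 u v (s - s') (t - t').
Proof. by rewrite lin2N lin2D. Qed.

Lemma lin2Z u v r s t : r *: lin2 u v s t = lin2 u v (r * s) (r * t).
Proof. by rewrite /lin2 scalerDr !scalerA. Qed.

Variables (ua va ub vb : A).
Definition lin4 s1 s2 s3 s4 :=
  lin2 (ua * ub) (ua * vb) s1 s2 + lin2 (va * ub) (va * vb) s3 s4.

Lemma lin4B s1 s2 s3 s4 t1 t2 t3 t4 :
  lin4 s1 s2 s3 s4 - lin4 t1 t2 t3 t4 = lin4 (s1 - t1) (s2 - t2) (s3 - t3) (s4 - t4).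
Proof. by rewrite /lin4 opprD addrACA !lin2B. Qed.

Lemma lin4Z r s1 s2 s3 s4 :
  r *: lin4 s1 s2 s3 s4 = lin4 (r * s1) (r * s2) (r * s3) (r * s4).
Proof. by rewrite /lin4 scalerDr !lin2Z. Qed.

Lemma lin4M s t s' t' :
  lin2 ua va s t * lin2 ub vb s' t' = lin4 (s * s') (s * t') (t * s') (t * t').
Proof.
by rewrite /lin4 /lin2 mulrDl !mulrDr -!scalerAl -!scalerAr !scalerA.
Qed.

Hypotheses (c1 : GRing.comm ua ub) (c2 : GRing.comm ua vb)
  (c3 : GRing.comm va ub) (c4 : GRing.comm va vb).

Lemma lin4Mr s t s' t' :
  lin2 ub vb s' t' * lin2 ua va s t = lin4 (s * s') (s * t') (t * s') (t * t').
Proof.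
rewrite /lin4 /lin2 mulrDl !mulrDr -!scalerAl -!scalerAr !scalerA.
rewrite -c1 -c2 -c3 -c4 [in RHS]addrACA !(mulrC s) !(mulrC t).
by rewrite [_ *: (ua * vb) + _]addrC.
Qed.

Lemma lin4_e1 : ua * ub = lin4 1 0 0 0.
Proof. by rewrite /lin4 /lin2 !scale0r !addr0 scale1r. Qed.
Lemma lin4_e2 : ua * vb = lin4 0 1 0 0.
Proof. by rewrite /lin4 /lin2 !scale0r !addr0 add0r scale1r. Qed.
Lemma lin4_e3 : va * ub = lin4 0 0 1 0.
Proof. by rewrite /lin4 /lin2 !scale0r !addr0 !add0r scale1r. Qed.
Lemma lin4_e4 : va * vb = lin4 0 0 0 1.
Proof. by rewrite /lin4 /lin2 !scale0r !addr0 !add0r scale1r. Qed.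
End Lin.
Arguments lin2 {F A}.
Arguments lin4 {F A}.
Arguments lin4Mr {F A ua va ub vb}.

Lemma comm_inv (R : pzRingType) (x z zi : R) :
  GRing.comm x z -> z * zi = 1 -> zi * z = 1 -> GRing.comm x zi.
Proof.
move=> cxz h1 h2; rewrite /GRing.comm.
by rewrite -[zi * x]mulr1 -h1 mulrA -(mulrA zi) cxz mulrA h2 mul1r.
Qed.

Section Main.
Variables (F : fieldType) (A : algType F) (n k : nat) (q : F)
    (psi psis om omi : 'I_n -> A).
Hypothesis H : Clq_rels k q psi psis om omi.
Hypothesis hq : q != 0.
Hypothesis hq2 : q ^+ (2 * k) != 1.

Definition phi (s : bool) a := if s then psi a else psis a.

Lemma anti s t x y : x != y -> phi s x * phi t y = - (phi t y * phi s x).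
Proof.
move=> nxy; apply/eqP; rewrite -addr_eq0; apply/eqP.
have [_ _ _ _ [h5 h6 _ _ h9]] := H x y.
have [_ _ _ _ [_ _ _ _ h9']] := H y x.
case: s; case: t => //=; first exact: h9.
by rewrite addrC; apply: h9'; rewrite eq_sym.
Qed.

Lemma Xcomm b s a : a != b -> psi b * psis b * phi s a = phi s a * (psi b * psis b).
Proof.
move=> nab; have nba : b != a by rewrite eq_sym.
rewrite -[psi b]/(phi true b) -[psis b]/(phi false b).
rewrite -mulrA (anti false s b a nba) mulrN (mulrA (phi true b)).
by rewrite (anti true s b a nba) mulNr opprK mulrA.
Qed.

Lemma Ycomm b s a : a != b -> psis b * psi b * phi s a = phi s a * (psis b * psi b).
Proof.
move=> nab; have nba : b != a by rewrite eq_sym.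
rewrite -[psi b]/(phi true b) -[psis b]/(phi false b).
rewrite -mulrA (anti true s b a nba) mulrN (mulrA (phi false b)).
by rewrite (anti false s b a nba) mulNr opprK mulrA.
Qed.

Let Q := q ^+ k.
Let c := Q - Q^-1.
Lemma Q0 : Q != 0. Proof. by rewrite expf_neq0. Qed.
Lemma Q2 : Q * Q != 1. Proof. by rewrite /Q -expr2 -exprM mulnC. Qed.
Lemma Qm1 : Q - 1 != 0.
Proof. apply: contraNneq Q2 => /eqP; rewrite subr_eq0 => /eqP ->; by rewrite mulr1. Qed.
Lemma Qp1 : Q + 1 != 0.
Proof.
apply: contraNneq Q2 => /eqP; rewrite addr_eq0 => /eqP ->; by rewrite mulrNN mulr1.
Qed.
Lemma c0 : c != 0.
Proof.
apply: contraNneq Q2 => h; rewrite /c in h.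
have: Q * (Q - Q^-1) = 0 by rewrite h mulr0.
by rewrite mulrBr mulfV ?Q0 // => /eqP; rewrite subr_eq0 => /eqP ->.
Qed.

Definition W a := om a ^+ k.
Definition Wi a := omi a ^+ k.

Lemma YL a : psis a * psi a = lin2 (W a) (Wi a) (- c^-1) (c^-1).
Proof.
have [_ _ _ _ [_ _ h7 h8 _]] := H a a.
have e : c *: (psis a * psi a) = Wi a - W a.
  by rewrite /W /Wi -h7 -h8 opprD addrACA subrr add0r -scalerBl.
rewrite -[psis a * psi a]scale1r -(mulVf c0) -scalerA e /lin2.
by rewrite scalerBr scaleNr addrC.
Qed.

Lemma XL a : psi a * psis a = lin2 (W a) (Wi a) (Q * c^-1) (1 - Q * c^-1).
Proof.
have [_ _ _ _ [_ _ h7 h8 _]] := H a a.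
have -> : psi a * psis a = Wi a - Q *: (psis a * psi a) by rewrite /Wi -h7 addrK.
rewrite YL lin2Z /lin2 opprD scalerBl scale1r mulrN scaleNr opprK.
by rewrite addrCA.
Qed.

Lemma Ycomm' b a : a != b ->
  psis b * psi b * psi a = psi a * (psis b * psi b) /\
  psis b * psi b * psis a = psis a * (psis b * psi b).
Proof. by move=> h; split; [exact: (Ycomm _ true _ h)|exact: (Ycomm _ false _ h)]. Qed.
Lemma Xcomm' b a : a != b ->
  psi b * psis b * psi a = psi a * (psi b * psis b) /\
  psi b * psis b * psis a = psis a * (psi b * psis b).
Proof. by move=> h; split; [exact: (Xcomm _ true _ h)|exact: (Xcomm _ false _ h)]. Qed.

Lemma c_om_omi a b : GRing.comm (om a) (omi b).
Proof.
have [h1 _ _ _ _] := H a b; have [_ [h2 h2'] _ _ _] := H b b.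
exact: comm_inv h1 h2 h2'.
Qed.
Lemma c_omi_omi a b : GRing.comm (omi a) (omi b).
Proof.
have [_ [h2 h2'] _ _ _] := H b b.
apply: comm_inv h2 h2'; apply/commr_sym; exact: c_om_omi.
Qed.
Lemma cWW a b : GRing.comm (W a) (W b).
Proof. have [h1 _ _ _ _] := H a b. by apply/commrX/commr_sym/commrX/commr_sym. Qed.
Lemma cWWi a b : GRing.comm (W a) (Wi b).
Proof. have h1 := c_om_omi a b. by apply/commrX/commr_sym/commrX/commr_sym. Qed.
Lemma cWiWi a b : GRing.comm (Wi a) (Wi b).
Proof. have h1 := c_omi_omi a b. by apply/commrX/commr_sym/commrX/commr_sym. Qed.

Lemma QQ1 : Q * Q - 1 != 0. Proof. by rewrite subr_eq0 Q2. Qed.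
Ltac fs := rewrite /c; field; rewrite ?Qp1 ?Qm1 ?Q0 ?QQ1 //.

Lemma I4 a : psi a * psis a + psis a * psi a
        = (q ^+ k + 1)^-1 *: (q ^+ k *: om a ^+ k + omi a ^+ k)
      /\ psi a * psis a - psis a * psi a
        = (q ^+ k - 1)^-1 *: (q ^+ k *: om a ^+ k - omi a ^+ k).
Proof.
rewrite -/Q -/(W a) -/(Wi a); split.


  rewrite (XL a) (YL a) lin2D /lin2 scalerDr scalerA; congr (_ *: _ + _ *: _); fs.

rewrite (XL a) (YL a) lin2B /lin2 scalerBr scalerA -scaleNr; congr (_ *: _ + _ *: _); fs.
Qed.

Lemma XcommP b s a : a != b ->
  phi true b * phi false b * phi s a = phi s a * (phi true b * phi false b).
Proof. exact: Xcomm. Qed.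

Lemma I3 a b cc sa sc (t : F) : a != b -> b != cc -> a != cc ->
  qcomm (phi sa a * psi b) (psis b * phi sc cc) t
  = (psi b * psis b + t *: (psis b * psi b)) * (phi sa a * phi sc cc).
Proof.
move=> nab nbc nac; have ncb : cc != b by rewrite eq_sym.
have nca : cc != a by rewrite eq_sym.
rewrite /qcomm -[psi b]/(phi true b) -[psis b]/(phi false b).
have e1 : phi sa a * phi true b * (phi false b * phi sc cc)
    = phi true b * phi false b * (phi sa a * phi sc cc).
  by rewrite !mulrA -(mulrA (phi sa a)) -(XcommP b sa a nab).
have e2 : phi false b * phi sc cc * (phi sa a * phi true b)
    = - (phi false b * phi true b * (phi sa a * phi sc cc)).
  rewrite !mulrA -(mulrA _ (phi sa a)) (anti sa true a b nab) mulrN.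
  rewrite !mulrA -(mulrA (phi false b) (phi sc cc)) (anti sc true cc b ncb).
  rewrite mulrN mulNr opprK !mulrA -(mulrA _ (phi sc cc)) (anti sc sa cc a nca).
  by rewrite mulrN !mulrA.
by rewrite e1 e2 scalerN opprK mulrDl scalerAl.
Qed.

Lemma I1 a b : a != b ->
  comm (psi a * psis b) (psi b * psis a)
        = (q ^+ k - q ^- k)^-1 *: ((om a * omi b) ^+ k - (om b * omi a) ^+ k).
Proof.
move=> nab; have nba : b != a by rewrite eq_sym.
rewrite -/Q -/c /comm.
have e1 : psi a * psis b * (psi b * psis a) = psis b * psi b * (psi a * psis a).
  have [h1 h2] := Ycomm' b a nab.
  by rewrite !mulrA -(mulrA (psi a) (psis b)) -h1.
have e2 : psi b * psis a * (psi a * psis b) = psis a * psi a * (psi b * psis b).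
  have [h1 h2] := Ycomm' a b nba.
  by rewrite !mulrA -(mulrA (psi b) (psis a)) -h1.
rewrite e1 e2 (YL b) (XL a) (YL a) (XL b).
rewrite (lin4Mr (cWW a b) (cWWi a b) (commr_sym (cWWi b a)) (cWiWi a b)).
rewrite lin4M lin4B.
rewrite (exprMn_comm k (c_om_omi a b)) (exprMn_comm k (c_om_omi b a)).
rewrite -/(W a) -/(Wi b) -/(W b) -/(Wi a) (cWWi b a).
rewrite (@lin4_e2 _ _ (W a) (Wi a) (W b) (Wi b)).
rewrite (@lin4_e3 _ _ (W a) (Wi a) (W b) (Wi b)) lin4B lin4Z.
congr lin4; fs.
Qed.

Lemma I2 a b : a != b ->
  comm (psi a * psi b) (psis b * psis a)
        = (q ^+ k - q ^- k)^-1 *: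
            ((q *: (om a * om b)) ^+ k - (q^-1 *: (omi b * omi a)) ^+ k).
Proof.
move=> nab; have nba : b != a by rewrite eq_sym.
rewrite -/Q -/c /comm.
have e1 : psi a * psi b * (psis b * psis a) = psi b * psis b * (psi a * psis a).
  have [h1 h2] := Xcomm' b a nab.
  by rewrite !mulrA -(mulrA (psi a) (psi b)) -h1.
have e2 : psis b * psis a * (psi a * psi b) = psis a * psi a * (psis b * psi b).
  have [h1 h2] := Ycomm' a b nba.
  by rewrite !mulrA -(mulrA (psis b) (psis a)) -h2.
rewrite e1 e2 (YL b) (XL a) (YL a) (XL b).
rewrite (lin4Mr (cWW a b) (cWWi a b) (commr_sym (cWWi b a)) (cWiWi a b)).
rewrite lin4M lin4B.
have [h1 _ _ _ _] := H a b.
rewrite !exprZn (exprMn_comm k h1) (exprMn_comm k (c_omi_omi b a)) exprVn.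
rewrite -/(W a) -/(Wi b) -/(W b) -/(Wi a) (cWiWi b a) -/Q.
rewrite (@lin4_e1 _ _ (W a) (Wi a) (W b) (Wi b)).
rewrite (@lin4_e4 _ _ (W a) (Wi a) (W b) (Wi b)) !lin4Z lin4B lin4Z.
congr lin4; fs.
Qed.

End Main.
Theorem lemma3p16 (F : fieldType) (A : algType F) (n k : nat) (q : F)
    (psi psis om omi : 'I_n -> A) :
  (2%:R != 0 :> F) -> (0 < n)%N -> (0 < k)%N -> q != 0 ->
  Clq_rels k q psi psis om omi ->
  q ^+ (2 * k) != 1 ->
  forall a b c : 'I_n, a != b -> b != c -> a != c ->
  forall sa sc : bool,
  let phia := if sa then psi a else psis a in
  let phic := if sc then psi c else psis c in
  [/\ comm (psi a * psis b) (psi b * psis a)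
        = (q ^+ k - q ^- k)^-1 *: ((om a * omi b) ^+ k - (om b * omi a) ^+ k),
      comm (psi a * psi b) (psis b * psis a)
        = (q ^+ k - q ^- k)^-1 *:
            ((q *: (om a * om b)) ^+ k - (q^-1 *: (omi b * omi a)) ^+ k),
      qcomm (phia * psi b) (psis b * phic) (q ^+ k) = omi b ^+ k * (phia * phic),
      qcomm (phia * psi b) (psis b * phic) (q ^- k) = om b ^+ k * (phia * phic)
    & psi a * psis a + psis a * psi a
        = (q ^+ k + 1)^-1 *: (q ^+ k *: om a ^+ k + omi a ^+ k)
      /\ psi a * psis a - psis a * psi a
        = (q ^+ k - 1)^-1 *: (q ^+ k *: om a ^+ k - omi a ^+ k)].
Proof.
move=> _ _ _ hq H hq2 a b c nab nbc nac sa sc phia phic.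
have [_ _ _ _ [_ _ h7 h8 _]] := H b b.
split.
- exact: (@I1 _ _ _ _ _ _ _ _ _ H hq hq2 _ _ nab).
- exact: (@I2 _ _ _ _ _ _ _ _ _ H hq hq2 _ _ nab).
- rewrite -h7; exact: (@I3 _ _ _ _ _ _ _ _ _ H a b c sa sc _ nab nbc nac).
- rewrite -h8; exact: (@I3 _ _ _ _ _ _ _ _ _ H a b c sa sc _ nab nbc nac).
- exact: (@I4 _ _ _ _ _ _ _ _ _ H hq hq2 a).
Qed.
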